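(* At any point during the execution of the Part I procedure, let $uv\in E$ be an edge such that $u$ is even and $v$ is odd. Then $\mathrm{lcp}_{\mathrm{odd}}(v)\le \mathrm{lcp}(u)+1$.
   Context: Let $G=(V,E)$ be a finite undirected graph and $M$ a matching in $G$; free vertices and $\mathit{mate}(v)$ are as usual. The Part I procedure maintains a search structure $S$: a forest whose nodes are either single (odd) vertices or blossoms (disjoint vertex sets with a distinguished base vertex), each tree rooted at a blossom containing a free vertex. Vertices in $S$ are labelled even (those in blossoms) or odd; vertices not in $S$ are unlabelled. A vertex is born even/odd according to the label it receives when inserted. The procedure maintains $\mathrm{lcp}(v)$ for even vertices and $\mathrm{lcp}_{\mathrm{odd}}(v)$ for vertices born odd. The blossom nodes currently in $S$ are the maximal blossoms. Phase $0$: every free vertex $v$ becomes the root of its own tree as a trivial blossom $\{v\}$ with base $v$, even, $\mathrm{lcp}(v)=0$. For $\Delta=1,2,\dots$, phase $\Delta$ does: (i) if $\Delta$ is even, growth steps: while some even vertex $v$ with $\mathrm{lcp}(v)=\Delta-2$ has a neighbour $x$ not in $S$, add $x$ as an odd child of the blossom containing $v$ with $\mathrm{lcp}_{\mathrm{odd}}(x)=\Delta-1$, and $\mathit{mate}(x)$ as a child of $x$, as a trivial even blossom with $\mathrm{lcp}(\mathit{mate}(x))=\Delta$; (ii) bridge steps: while there is a non-matching edge $xy$ with $x,y$ even, in different maximal blossoms $B_x,B_y$, and $\mathrm{lcp}(x)+\mathrm{lcp}(y)=2\Delta-2$: if $B_x,B_y$ lie in different trees the procedure stops; otherwise let $B$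 be the lowest common ancestor of $B_x,B_y$; every odd vertex $z$ on the tree paths from $B_x$ and $B_y$ to $B$ becomes even with $\mathrm{lcp}(z)=\mathrm{lcp}(x)+1+\mathrm{lcp}(y)-\mathrm{lcp}_{\mathrm{odd}}(z)$, and $B$ together with all blossoms and odd vertices on both paths is merged into one new blossom with base equal to the base of $B$, replacing $B$ in the tree. *)

(* Defs.v *)
From mathcomp Require Import all_boot.
From mathcomp Require Import boolp.
Set Implicit Arguments. Unset Strict Implicit. Unset Printing Implicit Defensive.

Section PartI.
Variables (V : finType) (e : rel V) (mate : V -> option V).

(* mate encodes the matching M: mate x = Some y iff xy in M. *)
Definition is_matching := forall x y, mate x = Some y -> mate y = Some x /\ e x y.

(* State of the procedure.
   - delta   : current phase number Delta
   - growing : true while in the growth sub-phase (i), false in bridge sub-phase (ii)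
   - inS     : vertices in S;   odd_set : vertices currently labelled odd (subset of inS);
               even vertices are inS :\: odd_set
   - rep w   : the node of S containing w: the base of its maximal blossom if w is
               even, w itself if w is odd
   - par n   : parent node of node n (None for roots)
   - lcp, lcpo : lcp(v) and lcp_odd(v) *)
Record state := St {
  delta : nat; growing : bool; inS : {set V}; odd_set : {set V};
  rep : V -> V; par : V -> option V; lcp : V -> nat; lcpo : V -> nat }.

Definition even_set (s : state) : {set V} := inS s :\: odd_set s.

Definition up (s : state) (k : nat) (n : V) : option V :=
  iter k (fun o => obind (par s) o) (Some n).
Definition ancs (s : state) (a n : V) : Prop := exists k, up s k n = Some a.
Definition is_lca (s : state) (b n1 n2 : V) : Prop :=
  ancs s b n1 /\ ancs s b n2 /\
  (forall c, ancs s c n1 -> ancs s c n2 -> ancs s c b).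

Definition upd {T : Type} (f : V -> T) (a : V) (t : T) : V -> T :=
  fun w => if w == a then t else f w.

Definition init : state :=
  St 1 true [set v | mate v == None] set0 id (fun _ => None) (fun _ => 0) (fun _ => 0).

Definition grow_avail (s : state) : Prop :=
  ~~ odd (delta s) /\
  exists v x, [/\ v \in even_set s, lcp s v + 2 = delta s, e v x & x \notin inS s].

(* growth step: x odd child of the blossom of v, y = mate x even child of x *)
Definition grow_state (s : state) (v x y : V) : state :=
  St (delta s) true (x |: (y |: inS s)) (x |: odd_set s)
     (upd (upd (rep s) x x) y y)
     (upd (upd (par s) x (Some (rep s v))) y (Some x))
     (upd (lcp s) y (delta s))
     (upd (lcpo s) x (delta s).-1).

Definition bridge_edge (s : state) (x y : V) : Prop :=
  [/\ x \in even_set s, y \in even_set s, e x y & mate x != Some y] /\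
  rep s x != rep s y /\ lcp s x + lcp s y + 2 = 2 * delta s.

Definition on_paths (s : state) (x y b n : V) : Prop :=
  ancs s b n /\ (ancs s n (rep s x) \/ ancs s n (rep s y)).

Definition merge_state (s : state) (x y b : V) : state :=
  let P n := `[< on_paths s x y b n >] in
  St (delta s) false (inS s) [set z in odd_set s | ~~ P z]
     (fun w => if (w \in inS s) && P (rep s w) then b else rep s w)
     (fun n => if par s n is Some p then (if P p then Some b else Some p) else None)
     (fun z => if (z \in odd_set s) && P z
               then lcp s x + 1 + lcp s y - lcpo s z else lcp s z)
     (lcpo s).

Definition end_growth (s : state) : state :=
  St (delta s) false (inS s) (odd_set s) (rep s) (par s) (lcp s) (lcpo s).
Definition next_phase (s : state) : state :=
  St (delta s).+1 true (inS s) (odd_set s) (rep s) (par s) (lcp s) (lcpo s).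

Inductive step (s : state) : state -> Prop :=
| StGrow v x y : growing s -> ~~ odd (delta s) -> v \in even_set s ->
    lcp s v + 2 = delta s -> e v x -> x \notin inS s -> mate x = Some y ->
    step s (grow_state s v x y)
| StEndGrow : growing s -> ~ grow_avail s -> step s (end_growth s)
| StBridge x y b : ~~ growing s -> bridge_edge s x y ->
    is_lca s b (rep s x) (rep s y) -> step s (merge_state s x y b)
    (* if B_x, B_y lie in different trees (no common ancestor) the procedure
       stops: no successor state *)
| StNext : ~~ growing s -> ~ (exists x y, bridge_edge s x y) ->
    step s (next_phase s).

Inductive reachable : state -> Prop :=
| ReachInit : reachable init
| ReachStep s s' : reachable s -> step s s' -> reachable s'.

End PartI.

(* Main.v *)
Require Import Defs.
From mathcomp Require Import all_boot.
From mathcomp Require Import boolp.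
From mathcomp Require Import zify.

Section Proof.
Variables (V : finType) (e : rel V) (mate : V -> option V).

Definition Inv (s : state V) :=
 [/\ (forall u v, e u v -> u \in even_set s -> v \in odd_set s -> lcpo s v <= lcp s u + 1),
     (forall u w, u \in even_set s -> e u w ->
        (lcp s u + 2 < delta s \/ (lcp s u + 2 = delta s /\ ~~ growing s)) -> w \in inS s),
     (forall v, v \in odd_set s -> lcpo s v + 1 <= delta s),
     (forall u, u \in even_set s -> ~~ odd (lcp s u)) &
     (forall v, v \in odd_set s -> odd (lcpo s v))].

Lemma inv_init : Inv (init mate).
Proof.
split=> //=.
- by move=> u w _ _ [H|[_ H]].
- by move=> v; rewrite inE.
Qed.

Lemma inv_grow s v x y : Inv s -> ~~ odd (delta s) -> v \in even_set s ->
    lcp s v + 2 = delta s -> e v x -> x \notin inS s ->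
    Inv (grow_state s v x y).
Proof.
case=> I0 I1 I2 I3 I4 Hd Hv Hlv _ Hx.
have evE : forall u, u \in even_set (grow_state s v x y) ->
   u = y \/ (u != x /\ u \in even_set s).
  move=> u; rewrite /even_set /= !inE.
  case: (eqVneq u y) => [->|uy]; first by left.
  case: (eqVneq u x) => //= ux /andP[uo ui]; right; split=> //; by rewrite uo.
have odE : forall u, u \in odd_set (grow_state s v x y) -> u = x \/ u \in odd_set s.
  by move=> u; rewrite /= !inE => /orP[/eqP|]; [left|right].
have lcpE : forall u, lcp (grow_state s v x y) u = if u == y then delta s else lcp s u.
  by [].
have lcpoE : forall u, lcpo (grow_state s v x y) u = if u == x then (delta s).-1 else lcpo s u.
  by [].
split.
- move=> u w euw /evE Hu /odE Hw; rewrite lcpE lcpoE.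
  case: (eqVneq u y) => [_|uy].
    case: (eqVneq w x) => [_|wx]; first lia.
    case: Hw => [/eqP|/I2]; [by rewrite (negbTE wx)|lia].
  case: Hu => [/eqP|[ux Hu]]; first by rewrite (negbTE uy).
  case: (eqVneq w x) => [wx|wx].
    subst w.
    have : ~ (lcp s u + 2 < delta s).
      by move=> H; move: (I1 u x Hu euw (or_introl H)); rewrite (negbTE Hx).
    lia.
  case: Hw => [/eqP|Hw]; first by rewrite (negbTE wx).
  exact: I0.
- move=> u w /evE Hu euw; rewrite lcpE /=.
  case: (eqVneq u y) => [_|uy]; first lia.
  case: Hu => [/eqP|[ux Hu]]; first by rewrite (negbTE uy).
  case=> [H|[_ H]] //.
  by rewrite !inE (I1 u w Hu euw (or_introl H)) !orbT.
- move=> w /odE Hw; rewrite lcpoE /=.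
  case: (eqVneq w x) => [_|wx]; first lia.
  case: Hw => [/eqP|Hw]; [by rewrite (negbTE wx)|exact: I2].
- move=> u /evE Hu; rewrite lcpE.
  case: (eqVneq u y) => [_|uy]; first by [].
  case: Hu => [/eqP|[ux Hu]]; [by rewrite (negbTE uy)|exact: I3].
- move=> w /odE Hw; rewrite lcpoE.
  case: (eqVneq w x) => [_|wx].
    have d2 : delta s = (delta s).-2.+2 by lia.
    by move: Hd; rewrite d2 /=; case: (delta s).-2 => //= n; rewrite negbK.
  case: Hw => [/eqP|Hw]; [by rewrite (negbTE wx)|exact: I4].
Qed.

Lemma inv_merge s x y b : Inv s -> ~~ growing s -> bridge_edge e mate s x y ->
    Inv (merge_state s x y b).
Proof.
case=> I0 I1 I2 I3 I4 Hg [[Hx Hy _ _] [_ Hxy]].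
set s' := merge_state s x y b.
have evE : forall u, u \in even_set s' ->
   (u \in odd_set s /\ lcp s' u = lcp s x + 1 + lcp s y - lcpo s u) \/
   (u \in even_set s /\ lcp s' u = lcp s u).
  move=> u; rewrite /even_set /s' /= !inE.
  case: (boolP (u \in odd_set s)) => uo /=.
    by rewrite negbK => /andP[-> _]; left.
  by move=> ->; right.
have odE : forall u, u \in odd_set s' -> u \in odd_set s.
  by move=> u; rewrite /s' /= inE => /andP[].
have lcpoE : lcpo s' = lcpo s by [].
have deltaE : delta s' = delta s by [].
have inSE : inS s' = inS s by [].
have Hev : forall z, z \in odd_set s ->
   delta s <= lcp s x + 1 + lcp s y - lcpo s z.
  move=> z /I2; lia.
split; rewrite ?lcpoE ?deltaE ?inSE.
- move=> u w euw /evE [[Hu ->]|[Hu ->]] /odE Hw.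
    move: (I2 w Hw) (Hev u Hu); lia.
  exact: I0.
- move=> u w /evE [[Hu ->]|[Hu ->]] euw.
    move: (Hev u Hu); rewrite /s' /=; lia.
  move=> H; apply: (I1 u w Hu euw); move: H; rewrite /s' /= => -[H|[H _]]; auto.
- by move=> v /odE /I2.
- move=> u /evE [[Hu ->]|[Hu ->]]; last exact: I3.
  have le : lcpo s u <= lcp s x + 1 + lcp s y by move: (Hev u Hu); lia.
  rewrite oddB // (I4 u Hu) !oddD (negbTE (I3 x Hx)) (negbTE (I3 y Hy)) //.
- by move=> v /odE /I4.
Qed.

Lemma inv_step s s' : Inv s -> step e mate s s' -> Inv s'.
Proof.
move=> I; case: I => I0 I1 I2 I3 I4 [].
- move=> v x y _ Hd Hv Hl Hvx Hx _; exact: inv_grow.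
- move=> Hg Hna; split=> //=.
  move=> u w Hu euw [H|[H _]]; first exact: (I1 u w Hu euw (or_introl H)).
  case: (boolP (odd (delta s))) => Hd.
    by move: (I3 u Hu) Hd; rewrite -H addn2 /= negbK => /negbTE ->.
  case: (boolP (w \in inS s)) => // Hw; exfalso; apply: Hna; split=> //.
  by exists u, w.
- move=> x y b Hg Hb _; exact: inv_merge.
- move=> Hg _; split=> //=.
  + move=> u w Hu euw [H|[H _]] //.
    apply: (I1 u w Hu euw); have [H'|H'] : lcp s u + 2 < delta s \/ lcp s u + 2 = delta s by lia.
    by left. by right.
  + by move=> v Hv; move: (I2 v Hv); lia.
Qed.

End Proof.

Theorem lemma2 (V : finType) (e : rel V) (mate : V -> option V) :
  symmetric e -> irreflexive e -> is_matching e mate ->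
  forall s : state V, reachable e mate s ->
  forall u v : V, e u v -> u \in even_set s -> v \in odd_set s ->
  lcpo s v <= lcp s u + 1.
Proof.
move=> _ _ _ s R.
have : @Inv V e s.
  elim: R => [|s0 s1 _ IH St]; first exact: inv_init.
  exact: (@inv_step V e mate s0 s1 IH St).
by case.
Qed.
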